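(* For all $a,b>0$, $H(a,b)\le\lambda_s(a,b)\le G(a,b)$ whenever $-3\le s\le -1$. These bounds are best possible: the inequality $H(a,b)\le \lambda_s(a,b)$ holds for all $a,b>0$ if and only if $s\ge -3$, and the inequality $\lambda_s(a,b)\le G(a,b)$ holds for all $a,b>0$ if and only if $s\le -1$.
   Context: For $a,b>0$ with $a\neq b$ define $$\lambda_s(a,b)=\begin{cases}\dfrac{s-1}{s+1}\cdot\dfrac{a^{s+1}+b^{s+1}-2\left(\frac{a+b}{2}\right)^{s+1}}{a^s+b^s-2\left(\frac{a+b}{2}\right)^s}, & s\in\mathbb{R}\setminus\{-1,0,1\},\\[3mm] \dfrac{2\log\frac{a+b}{2}-\log a-\log b}{\frac{1}{2a}+\frac{1}{2b}-\frac{2}{a+b}}, & s=-1,\\[3mm] \dfrac{a\log a+b\log b-(a+b)\log\frac{a+b}{2}}{2\log\frac{a+b}{2}-\log a-\log b}, & s=0,\\[3mm] \dfrac{(b-a)^2}{4\left(a\log a+b\log b-(a+b)\log\frac{a+b}{2}\right)}, & s=1,\end{cases}$$ and $\lambda_s(a,a)=a$. The harmonic and geometric means are $H(a,b)=2(1/a+1/b)^{-1}$ and $G(a,b)=\sqrt{ab}$. *)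

(* Defs.v *)
From Stdlib Require Import Reals.
Open Scope R_scope.

Definition Amean (a b : R) : R := (a + b) / 2.

Definition Hmean (a b : R) : R := 2 * / (/ a + / b).

Definition Gmean (a b : R) : R := sqrt (a * b).

Definition lambda (s a b : R) : R :=
  if Req_EM_T a b then a
  else if Req_EM_T s (-1) then
    (2 * ln (Amean a b) - ln a - ln b) / (/ (2 * a) + / (2 * b) - 2 / (a + b))
  else if Req_EM_T s 0 then
    (a * ln a + b * ln b - (a + b) * ln (Amean a b)) / (2 * ln (Amean a b) - ln a - ln b)
  else if Req_EM_T s 1 then
    (b - a) ^ 2 / (4 * (a * ln a + b * ln b - (a + b) * ln (Amean a b)))
  else
    (s - 1) / (s + 1) *
    ((Rpower a (s + 1) + Rpower b (s + 1) - 2 * Rpower (Amean a b) (s + 1)) /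
     (Rpower a s + Rpower b s - 2 * Rpower (Amean a b) s)).

(* Main.v *)
Require Import Defs.
From Stdlib Require Import Reals Lra Psatz.
From Coquelicot Require Import Coquelicot.
Open Scope R_scope.

Lemma Rp_pos x k : 0 < Rpower x k.
Proof. unfold Rpower; apply exp_pos. Qed.

Lemma Rp_S x k : 0 < x -> Rpower x (k+1) = Rpower x k * x.
Proof. intros. rewrite Rpower_plus, Rpower_1; auto. Qed.

Lemma Rp_m1 x : 0 < x -> Rpower x (-1) = / x.
Proof. intros. unfold Rpower. replace (-1 * ln x) with (- ln x) by ring.
  rewrite exp_Ropp, exp_ln; auto. Qed.

Lemma Rp_le_pos x y e : 0 <= e -> 0 < x <= y -> Rpower x e <= Rpower y e.
Proof. intros; apply Rle_Rpower_l; auto. Qed.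

Lemma exp_le x y : x <= y -> exp x <= exp y.
Proof. intros; destruct (Req_dec x y). subst; lra. left; apply exp_increasing; lra. Qed.

Lemma Rp_le_neg x y e : e <= 0 -> 0 < x <= y -> Rpower y e <= Rpower x e.
Proof. intros. unfold Rpower. apply exp_le.
  assert (ln x <= ln y). { destruct (Req_dec x y). subst; lra. left; apply ln_increasing; lra. }
  nra. Qed.

Lemma mono (F f : R -> R) u v : u <= v ->
  (forall x, u <= x <= v -> is_derive F x (f x)) ->
  (forall x, u <= x <= v -> 0 <= f x) -> F u <= F v.
Proof. intros Huv Hd Hp. destruct (Req_dec u v). subst; lra.
  destruct (MVT_cor2 F f u v) as [c [Hc1 Hc2]]; [lra| |].
  intros c Hc; apply is_derive_Reals; auto.
  assert (0 <= f c) by (apply Hp; lra). nra. Qed.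

Lemma smono (F f : R -> R) u v : u < v ->
  (forall x, u <= x <= v -> is_derive F x (f x)) ->
  (forall x, u < x < v -> 0 < f x) -> F u < F v.
Proof. intros Huv Hd Hp.
  destruct (MVT_cor2 F f u v) as [c [Hc1 Hc2]]; [lra| |].
  intros c Hc; apply is_derive_Reals; auto.
  assert (0 < f c) by (apply Hp; lra). nra. Qed.

Lemma mono_diff (F f G g : R -> R) u v : u <= v ->
  (forall x, u <= x <= v -> is_derive F x (f x)) ->
  (forall x, u <= x <= v -> is_derive G x (g x)) ->
  (forall x, u <= x <= v -> g x <= f x) -> G v - G u <= F v - F u.
Proof. intros Huv HF HG Hp.
  assert ((fun x => F x - G x) u <= (fun x => F x - G x) v); [|simpl in *; lra].
  apply (mono (fun x => F x - G x) (fun x => f x - g x)); auto.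
  intros; apply (is_derive_minus F G); auto.
  intros x Hx; specialize (Hp x Hx); lra. Qed.

Lemma Rp_deriv x k : 0 < x -> is_derive (fun y => Rpower y k) x (k * Rpower x (k - 1)).
Proof. intros. apply is_derive_Reals, derivable_pt_lim_power; auto. Qed.

Definition Prim (j x : R) : R := if Req_EM_T j (-1) then ln x else Rpower x (j+1) / (j+1).

Lemma Prim_d j x : 0 < x -> is_derive (Prim j) x (Rpower x j).
Proof. intros Hx. unfold Prim. destruct (Req_EM_T j (-1)).
- subst. rewrite Rp_m1 by lra. apply is_derive_Reals, derivable_pt_lim_ln; lra.
- assert (Hj : j + 1 <> 0) by lra.
  replace (Rpower x j) with (/ (j+1) * ((j+1) * Rpower x (j+1-1))).
  apply (is_derive_ext (fun y => / (j+1) * Rpower y (j+1))).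
  { intros t. unfold Rdiv. apply Rmult_comm. }
  apply (is_derive_scal (fun y => Rpower y (j+1))).
  apply Rp_deriv; auto.
  replace (j+1-1) with j by ring. field. auto.
Qed.

Lemma d_lin3 (F1 F2 F3 : R->R) d1 d2 d3 al be ga x :
  is_derive F1 x d1 -> is_derive F2 x d2 -> is_derive F3 x d3 ->
  is_derive (fun y => al*F1 y + be*F2 y + ga*F3 y) x (al*d1+be*d2+ga*d3).
Proof. intros H1 H2 H3.
  apply (is_derive_plus (fun y => al*F1 y + be*F2 y) (fun y => ga*F3 y)).
  apply (is_derive_plus (fun y => al*F1 y) (fun y => be*F2 y)).
  apply is_derive_scal; auto. apply is_derive_scal; auto. apply is_derive_scal; auto.
Qed.

Lemma d_comb2 k x g al : 0 < x ->
  is_derive (fun y => g * Prim (k+1) y + al * Prim k y) x (Rpower x k * (g * x + al)).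
Proof. intros Hx.
  replace (Rpower x k * (g * x + al)) with (g * Rpower x (k+1) + al * Rpower x k + 0 * Rpower x k)
    by (rewrite Rp_S; auto; ring).
  apply (is_derive_ext (fun y => g * Prim (k+1) y + al * Prim k y + 0 * Prim k y)).
  { intros t. simpl. ring. }
  apply d_lin3; apply Prim_d; auto.
Qed.

Lemma d_comb3 k x g al be : 0 < x ->
  is_derive (fun y => g * Prim (k+1+1) y + al * Prim (k+1) y + be * Prim k y) x
     (Rpower x k * (g * x * x + al * x + be)).
Proof. intros Hx.
  replace (Rpower x k * (g * x * x + al * x + be)) with (g * Rpower x (k+1+1) + al * Rpower x (k+1) + be * Rpower x k)
    by (rewrite !Rp_S; auto; ring).
  apply d_lin3; apply Prim_d; auto.
Qed.

Definition Iv (k a b : R) : R :=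
  (Prim (k+1) ((a+b)/2) - Prim (k+1) a - a*(Prim k ((a+b)/2) - Prim k a)) +
  (b*(Prim k b - Prim k ((a+b)/2)) - (Prim (k+1) b - Prim (k+1) ((a+b)/2))).

Definition W (k c a b : R) : R := Iv (k+1) a b - c * Iv k a b.

Lemma Iv_pos k a b : 0 < a < b -> 0 < Iv k a b.
Proof. intros [Ha Hab].
  set (Fl := fun y => 1 * Prim (k+1) y + (-a) * Prim k y).
  set (Fr := fun y => (-1) * Prim (k+1) y + b * Prim k y).
  assert (H1 : Fl a < Fl ((a+b)/2)).
  { apply (smono Fl (fun x => Rpower x k * (1 * x + - a))). lra.
    intros x Hx; apply d_comb2; lra.
    intros x Hx. apply Rmult_lt_0_compat. apply Rp_pos. lra. }
  assert (H2 : Fr ((a+b)/2) <= Fr b).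
  { apply (mono Fr (fun x => Rpower x k * (-1 * x + b))). lra.
    intros x Hx; apply d_comb2; lra.
    intros x Hx. apply Rmult_le_pos. left; apply Rp_pos. lra. }
  unfold Fl, Fr in *. unfold Iv. lra.
Qed.

Lemma W_cmp k1 k0 c ka a b : 0 < a < b ->
  (forall x, a <= x <= b -> ka * Rpower x k0 * (x - c) <= Rpower x k1 * (x - c)) ->
  ka * W k0 c a b <= W k1 c a b.
Proof. intros [Ha Hab] Hp.
  set (A := (a+b)/2).
  pose (GL := fun y => ka * Prim (k0+1+1) y + (- ka * (c+a)) * Prim (k0+1) y + (ka*c*a) * Prim k0 y).
  pose (FL := fun y => 1 * Prim (k1+1+1) y + (- 1 * (c+a)) * Prim (k1+1) y + (1*c*a) * Prim k1 y).
  pose (GR := fun y => -ka * Prim (k0+1+1) y + (ka * (c+b)) * Prim (k0+1) y + (-ka*c*b) * Prim k0 y).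
  pose (FR := fun y => -1 * Prim (k1+1+1) y + (1 * (c+b)) * Prim (k1+1) y + (-1*c*b) * Prim k1 y).
  assert (HL : GL A - GL a <= FL A - FL a).
  { apply (mono_diff FL (fun x => Rpower x k1 * (1 * x * x + (- 1 * (c+a)) * x + 1*c*a))
                     GL (fun x => Rpower x k0 * (ka * x * x + (- ka * (c+a)) * x + ka*c*a))).
    unfold A; lra.
    intros x Hx; apply d_comb3; unfold A in *; lra.
    intros x Hx; apply d_comb3; unfold A in *; lra.
    intros x Hx. assert (Hx' : a <= x <= b) by (unfold A in *; lra).
    specialize (Hp x Hx'). assert (0 <= x - a) by lra. nra. }
  assert (HR : GR b - GR A <= FR b - FR A).
  { apply (mono_diff FR (fun x => Rpower x k1 * (-1 * x * x + (1 * (c+b)) * x + -1*c*b))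
                     GR (fun x => Rpower x k0 * (-ka * x * x + (ka * (c+b)) * x + -ka*c*b))).
    unfold A; lra.
    intros x Hx; apply d_comb3; unfold A in *; lra.
    intros x Hx; apply d_comb3; unfold A in *; lra.
    intros x Hx. assert (Hx' : a <= x <= b) by (unfold A in *; lra).
    specialize (Hp x Hx'). assert (0 <= b - x) by lra. nra. }
  unfold GL, FL, GR, FR in HL, HR. unfold W, Iv. fold A. lra.
Qed.

Ltac dec_eqs := repeat match goal with |- context [Req_EM_T ?x ?y] =>
   destruct (Req_EM_T x y); try (exfalso; lra) end.

Lemma Iv_gen k a b : 0 < a -> 0 < b -> k + 1 <> 0 -> k + 2 <> 0 ->
  Iv k a b = (Rpower a (k+2) + Rpower b (k+2) - 2 * Rpower ((a+b)/2) (k+2)) / ((k+2)*(k+1)).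
Proof. intros Ha Hb H1 H2. unfold Iv, Prim. dec_eqs.
  replace (k+2) with (k+1+1) by ring.
  assert (HA : 0 < (a+b)/2) by lra.
  rewrite !(Rp_S _ (k+1)) by lra. rewrite !(Rp_S _ k) by lra.
  field. split; lra.
Qed.

Lemma Iv_m1 a b : 0 < a -> 0 < b ->
  Iv (-1) a b = a * ln a + b * ln b - (a + b) * ln ((a+b)/2).
Proof. intros Ha Hb. unfold Iv, Prim. dec_eqs.
  replace (-1+1+1) with 1 by ring. rewrite !Rpower_1 by lra. field.
Qed.

Lemma Iv_m2 a b : 0 < a -> 0 < b ->
  Iv (-2) a b = 2 * ln ((a+b)/2) - ln a - ln b.
Proof. intros Ha Hb. unfold Iv, Prim. dec_eqs.
  replace (-2+1) with (-1) by ring. rewrite !Rp_m1 by lra. field. split; lra.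
Qed.

Lemma Iv_sym k a b : 0 < a -> 0 < b -> Iv k a b = Iv k b a.
Proof. intros Ha Hb. replace ((b+a)/2) with ((a+b)/2) by field.
  destruct (Req_dec k (-1)) as [->|H1]. rewrite !Iv_m1 by lra.
  replace ((b+a)/2) with ((a+b)/2) by field. ring.
  destruct (Req_dec k (-2)) as [->|H2]. rewrite !Iv_m2 by lra.
  replace ((b+a)/2) with ((a+b)/2) by field. ring.
  rewrite !Iv_gen by lra. replace ((b+a)/2) with ((a+b)/2) by field. field. split; lra.
Qed.

Lemma Iv_pos2 k a b : 0 < a -> 0 < b -> a <> b -> 0 < Iv k a b.
Proof. intros Ha Hb Hab. destruct (Rlt_dec a b). apply Iv_pos; lra.
  rewrite Iv_sym by lra. apply Iv_pos; lra. Qed.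

Lemma lambda_eq s a b : 0 < a -> 0 < b -> a <> b ->
  lambda s a b = Iv (s-1) a b / Iv (s-2) a b.
Proof. intros Ha Hb Hab. unfold lambda, Amean.
  assert (HA : 0 < (a+b)/2) by lra.
  destruct (Req_EM_T a b) as [E|_]; [contradiction|].
  destruct (Req_EM_T s (-1)) as [->|n1].
  { replace (-1-1) with (-2) by ring. replace (-1-2) with (-3) by ring.
    rewrite Iv_m2, Iv_gen by lra. replace (-3+2) with (-1) by ring.
    rewrite !Rp_m1 by lra. unfold Rdiv. f_equal. f_equal. field. split; lra. }
  destruct (Req_EM_T s 0) as [->|n0].
  { replace (0-1) with (-1) by ring. replace (0-2) with (-2) by ring.
    rewrite Iv_m1, Iv_m2 by lra. reflexivity. }
  destruct (Req_EM_T s 1) as [->|n1'].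
  { replace (1-1) with 0 by ring. replace (1-2) with (-1) by ring.
    rewrite Iv_m1, Iv_gen by lra. replace (0+2) with (1+1) by ring.
    rewrite !(Rp_S _ 1), !Rpower_1 by lra. unfold Rdiv. rewrite Rinv_mult. set (Y := / (a * ln a + b * ln b - (a + b) * ln ((a + b) * / 2))). field. }
  assert (HI := Iv_pos2 (s-2) a b Ha Hb Hab).
  rewrite Iv_gen in HI by lra. replace (s-2+2) with s in HI by ring.
  rewrite !Iv_gen by lra. replace (s-1+2) with (s+1) by ring. replace (s-2+2) with s by ring.
  assert (HD : Rpower a s + Rpower b s - 2 * Rpower ((a + b) / 2) s <> 0).
  { intro E. rewrite E in HI. unfold Rdiv in HI. rewrite Rmult_0_l in HI. lra. }
  field. repeat split; try lra. 
Qed.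

Lemma Rp_m2 x : 0 < x -> Rpower x (-2) = / (x*x).
Proof. intros. replace (-2) with (-1 + -1) by ring. rewrite Rpower_plus, Rp_m1 by lra.
  rewrite Rinv_mult. reflexivity. Qed.

Lemma Rp_m3 x : 0 < x -> Rpower x (-3) = / (x*x*x).
Proof. intros. replace (-3) with (-2 + -1) by ring. rewrite Rpower_plus, Rp_m1, Rp_m2 by lra.
  rewrite !Rinv_mult. reflexivity. Qed.

Lemma W_base_H a b : 0 < a < b -> 0 <= W (-5) (Hmean a b) a b.
Proof. intros [Ha Hab]. unfold W. replace (-5+1) with (-4) by ring.
  rewrite !Iv_gen by lra. replace (-4+2) with (-2) by ring. replace (-5+2) with (-3) by ring.
  assert (HA : 0 < (a+b)/2) by lra.
  rewrite !Rp_m2, !Rp_m3 by lra. unfold Hmean.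
  replace ((/ (a * a) + / (b * b) - 2 * / ((a + b) / 2 * ((a + b) / 2))) / ((-2) * (-4 + 1)) -
    2 * / (/ a + / b) * ((/ (a * a * a) + / (b * b * b) - 2 * / ((a + b) / 2 * ((a + b) / 2) * ((a + b) / 2))) / ((-3) * (-5 + 1))))
   with (((a-b)^2)^2 / (6 * (a*b) * (a+b)^4)) by (field; lra).
  apply Rmult_le_pos. apply pow2_ge_0. left; apply Rinv_0_lt_compat. 
  apply Rmult_lt_0_compat. nra. apply pow_lt; lra.
Qed.

Lemma H_le s a b : -3 <= s -> 0 < a < b -> Hmean a b <= lambda s a b.
Proof. intros Hs [Ha Hab].
  rewrite lambda_eq by lra.
  assert (HI := Iv_pos (s-2) a b (conj Ha Hab)).
  assert (HH : 0 < Hmean a b).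
  { unfold Hmean. apply Rmult_lt_0_compat. lra. apply Rinv_0_lt_compat.
    assert (0 < /a) by (apply Rinv_0_lt_compat; lra). assert (0 < /b) by (apply Rinv_0_lt_compat; lra). lra. }
  assert (Hb := W_base_H a b (conj Ha Hab)).
  set (Hm := Hmean a b) in *. clearbody Hm.
  assert (Hc := W_cmp (s-2) (-5) Hm (Rpower Hm (s+3)) a b (conj Ha Hab)).
  assert (HW : 0 <= W (s-2) Hm a b).
  { assert (0 <= Rpower Hm (s+3) * W (-5) Hm a b) by (apply Rmult_le_pos; auto; left; apply Rp_pos).
    enough (Rpower Hm (s+3) * W (-5) Hm a b <= W (s-2) Hm a b) by lra.
    apply Hc. intros x Hx.
    replace (s-2) with (-5 + (s+3)) by ring. rewrite (Rpower_plus (-5) (s+3) x).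
    assert (0 < Rpower x (-5)) by apply Rp_pos.
    destruct (Rle_dec Hm x).
    - assert (Rpower Hm (s+3) <= Rpower x (s+3)) by (apply Rp_le_pos; lra).
      assert (0 <= Rpower x (-5) * ((Rpower x (s+3) - Rpower Hm (s+3)) * (x - Hm))).
      { apply Rmult_le_pos; [lra| apply Rmult_le_pos; lra]. }
      match goal with |- ?L <= ?R => assert (E : R - L = Rpower x (-5) * ((Rpower x (s+3) - Rpower Hm (s+3)) * (x - Hm))) by ring end.
      lra.
    - assert (Rpower x (s+3) <= Rpower Hm (s+3)) by (apply Rp_le_pos; lra).
      assert (0 <= Rpower x (-5) * ((Rpower Hm (s+3) - Rpower x (s+3)) * (Hm - x))).
      { apply Rmult_le_pos; [lra| apply Rmult_le_pos; lra]. }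
      match goal with |- ?L <= ?R => assert (E : R - L = Rpower x (-5) * ((Rpower Hm (s+3) - Rpower x (s+3)) * (Hm - x))) by ring end.
      lra. }
  unfold W in HW. replace (s-2+1) with (s-1) in HW by ring.
  apply Rmult_le_reg_r with (Iv (s-2) a b); auto. unfold Rdiv. rewrite Rmult_assoc, Rinv_l by lra. lra.
Qed.

Lemma log_ineq y : 1 <= y -> 2 * ln y <= y - / y.
Proof. intros Hy.
  assert (H := mono (fun t => t - / t - 2 * ln t) (fun t => (1 - / t)^2) 1 y Hy).
  cbv beta in H. rewrite ln_1 in H. replace (1 - / 1 - 2 * 0) with 0 in H by field.
  enough (0 <= y - / y - 2 * ln y) by lra. apply H.
  - intros x Hx. auto_derive. lra. field. lra.
  - intros; apply pow2_ge_0.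
Qed.

Lemma Gpos a b : 0 < a -> 0 < b -> 0 < Gmean a b.
Proof. intros; unfold Gmean; apply sqrt_lt_R0; nra. Qed.

Lemma Gsq a b : 0 < a -> 0 < b -> Gmean a b * Gmean a b = a * b.
Proof. intros; unfold Gmean; apply sqrt_sqrt; nra. Qed.

Lemma G_le_A a b : 0 < a -> 0 < b -> Gmean a b <= (a+b)/2.
Proof. intros Ha Hb. assert (H1 := Gsq a b Ha Hb). assert (H2 := Gpos a b Ha Hb).
  set (G := Gmean a b) in *. clearbody G.
  assert (E : ((a+b)/2 - G) * ((a+b)/2 + G) = (a+b)*(a+b)/4 - G*G) by field.
  rewrite H1 in E.
  destruct (Rle_dec G ((a+b)/2)) as [|n]; auto. exfalso.
  assert (((a+b)/2 - G) * ((a+b)/2 + G) < 0). { apply Rmult_neg_pos; lra. }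
  assert (0 <= (a-b)*(a-b)) by apply Rle_0_sqr. lra. Qed.

Lemma W_base_G a b : 0 < a < b -> W (-3) (Gmean a b) a b <= 0.
Proof. intros [Ha Hab]. unfold W. replace (-3+1) with (-2) by ring.
  assert (Hb : 0 < b) by lra.
  assert (HG := Gpos a b Ha Hb). assert (HGG := Gsq a b Ha Hb). assert (HGA := G_le_A a b Ha Hb).
  set (G := Gmean a b) in *. clearbody G.
  set (A := (a+b)/2) in *.
  assert (HA : 0 < A) by (unfold A; lra).
  rewrite Iv_m2, Iv_gen by lra. replace (-3+2) with (-1) by ring. rewrite !Rp_m1 by lra.
  fold A.
  assert (E1 : 2 * ln A - ln a - ln b = 2 * ln (A / G)).
  { rewrite ln_div by lra. assert (ln a + ln b = 2 * ln G).
    { rewrite <- ln_mult by lra. rewrite <- HGG. rewrite ln_mult by lra. ring. } lra. }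
  assert (E2 : G * ((/ a + / b - 2 * / A) / (-1 * (-3 + 1))) = A / G - / (A / G)).
  { assert (Eb : b = G * G / a) by (rewrite HGG; field; lra).
    assert (EA : A = (a + G*G/a)/2) by (unfold A; rewrite <- Eb; reflexivity).
    rewrite EA. rewrite Eb at 1. field. repeat split; try lra. nra. }
  rewrite E1, E2. assert (HyG : 1 <= A / G).
  { apply (Rmult_le_reg_r G); auto. unfold Rdiv. rewrite Rmult_assoc, Rinv_l by lra. lra. }
  assert (Hl := log_ineq (A/G) HyG). lra.
Qed.

Lemma G_le s a b : s <= -1 -> 0 < a < b -> lambda s a b <= Gmean a b.
Proof. intros Hs [Ha Hab].
  rewrite lambda_eq by lra.
  assert (HI := Iv_pos (s-2) a b (conj Ha Hab)).
  assert (HG := Gpos a b Ha ltac:(lra)).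
  assert (Hb := W_base_G a b (conj Ha Hab)).
  set (G := Gmean a b) in *. clearbody G.
  assert (Hc := W_cmp (-3) (s-2) G (Rpower G (-(s+1))) a b (conj Ha Hab)).
  assert (HK : Rpower G (-(s+1)) * Rpower G (s+1) = 1).
  { rewrite <- Rpower_plus. replace (-(s+1) + (s+1)) with 0 by ring. apply Rpower_O; auto. }
  assert (HKp : 0 < Rpower G (-(s+1))) by apply Rp_pos.
  assert (HW : W (s-2) G a b <= 0).
  { assert (Rpower G (-(s+1)) * W (s-2) G a b <= W (-3) G a b).
    { apply Hc. intros x Hx.
      replace (s-2) with (-3 + (s+1)) by ring. rewrite (Rpower_plus (-3) (s+1) x).
      assert (0 < Rpower x (-3)) by apply Rp_pos.
      destruct (Rle_dec G x).
      - assert (Rpower x (s+1) <= Rpower G (s+1)) by (apply Rp_le_neg; lra).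
        assert (0 <= Rpower x (-3) * ((1 - Rpower G (-(s+1)) * Rpower x (s+1)) * (x - G))).
        { apply Rmult_le_pos; [lra| apply Rmult_le_pos; nra]. }
        match goal with |- ?L <= ?R => assert (E : R - L = Rpower x (-3) * ((1 - Rpower G (-(s+1)) * Rpower x (s+1)) * (x - G))) by ring end.
        lra.
      - assert (Rpower G (s+1) <= Rpower x (s+1)) by (apply Rp_le_neg; lra).
        assert (0 <= Rpower x (-3) * ((Rpower G (-(s+1)) * Rpower x (s+1) - 1) * (G - x))).
        { apply Rmult_le_pos; [lra| apply Rmult_le_pos; nra]. }
        match goal with |- ?L <= ?R => assert (E : R - L = Rpower x (-3) * ((Rpower G (-(s+1)) * Rpower x (s+1) - 1) * (G - x))) by ring end.
        lra. }
    nra. }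
  unfold W in HW. replace (s-2+1) with (s-1) in HW by ring.
  apply Rmult_le_reg_r with (Iv (s-2) a b); auto. unfold Rdiv. rewrite Rmult_assoc, Rinv_l by lra. lra.
Qed.

Lemma Rp_one y : Rpower 1 y = 1.
Proof. unfold Rpower. rewrite ln_1, Rmult_0_r. apply exp_0. Qed.

Lemma Rp_exp_dec x y1 y2 : 0 < x < 1 -> y1 <= y2 -> Rpower x y2 <= Rpower x y1.
Proof. intros Hx Hy. unfold Rpower. apply exp_le.
  assert (ln x < 0). { rewrite <- ln_1. apply ln_increasing; lra. } nra. Qed.

Lemma Rp_3 x : 0 < x -> Rpower x 3 = x * x * x.
Proof. intros. replace 3 with (1+1+1) by ring. rewrite !Rp_S, Rpower_1 by lra. ring. Qed.

Lemma H_counter s : s < -3 -> exists a b, 0 < a /\ 0 < b /\ lambda s a b < Hmean a b.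
Proof. intros Hs.
  set (e := (s+3)/(s+1)).
  assert (He : 0 < e < 1).
  { unfold e. split. apply Rdiv_neg_neg; lra.
    replace ((s+3)/(s+1)) with (1 + 2 * / (s+1)) by (field; lra).
    assert (/ (s+1) < 0) by (apply Rinv_lt_0_compat; lra). lra. }
  assert (Hr : (s-1)/(s+1) = 2 - e) by (unfold e; field; lra).
  set (b := e/8).
  assert (Hb : 0 < b < 1/8) by (unfold b; lra).
  exists 1, b. split. lra. split. lra.
  unfold lambda, Amean, Hmean.
  destruct (Req_EM_T 1 b). lra.
  destruct (Req_EM_T s (-1)). lra. destruct (Req_EM_T s 0). lra. destruct (Req_EM_T s 1). lra.
  rewrite Hr, !Rp_one.
  assert (HA : 1/2 <= (1+b)/2) by lra.
  set (B := Rpower b s). set (u := Rpower b (-s)).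
  assert (HuB : u * B = 1).
  { unfold u, B. rewrite <- Rpower_plus. replace (-s+s) with 0 by ring. apply Rpower_O; lra. }
  assert (Hu0 : 0 < u) by apply Rp_pos.
  assert (HB0 : 0 < B) by apply Rp_pos.
  rewrite (Rp_S b s) by lra. fold B.
  assert (HA1 : 0 < Rpower ((1+b)/2) (s+1)) by apply Rp_pos.
  assert (HAT : Rpower ((1+b)/2) s <= Rpower (/2) s) by (apply Rp_le_neg; lra).
  assert (HT : Rpower (/2) s = Rpower 2 (-s)).
  { unfold Rpower. rewrite ln_Rinv by lra. f_equal. ring. }
  set (z := Rpower (2*b) (-s)).
  assert (Hz : Rpower (/2) s * u = z).
  { rewrite HT. unfold u, z. apply Rpower_mult_distr; lra. }
  assert (Hz0 : 0 < z) by apply Rp_pos.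
  assert (Hz1 : z <= 2*b*(2*b)*(2*b)).
  { rewrite <- Rp_3 by lra. apply Rp_exp_dec; lra. }
  assert (Hu1 : u <= b*b*b).
  { rewrite <- Rp_3 by lra. apply Rp_exp_dec; lra. }
  set (T := Rpower (/2) s) in *. clearbody T.
  set (As := Rpower ((1+b)/2) s) in *. clearbody As.
  set (As1 := Rpower ((1+b)/2) (s+1)) in *. clearbody As1.
  clearbody u B z.
  set (N := 1 + B * b - 2 * As1). set (D := 1 + B - 2 * As).
  assert (HNu : N * u <= u + b).
  { unfold N. assert (B*b*u = b) by nra. nra. }
  assert (HDu : u + 1 - 2 * z <= D * u).
  { unfold D. assert (As * u <= T * u) by nra. nra. }
  assert (Hbz : z <= 1/64) by nra.
  assert (HD : 0 < D).
  { assert (0 < D * u) by lra. destruct (Rle_dec D 0); [|lra]. nra. }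
  replace (2 * / (/ 1 + / b)) with (2 * b / (1 + b)) by (field; lra).
  apply (Rmult_lt_reg_r (D * (1 + b) * u)). 
  { apply Rmult_lt_0_compat; [apply Rmult_lt_0_compat|]; lra. }
  replace ((2 - e) * (N / D) * (D * (1 + b) * u)) with ((2 - e) * (N * u) * (1 + b)) by (field; lra).
  replace (2 * b / (1 + b) * (D * (1 + b) * u)) with (2 * b * (D * u)) by (field; lra).
  fold N.
  assert (S1 : (2 - e) * (N * u) * (1 + b) <= (2 - e) * (u + b) * (1 + b)).
  { apply Rmult_le_compat_r. lra. apply Rmult_le_compat_l; lra. }
  assert (S2 : 2 * b * (u + 1 - 2 * z) <= 2 * b * (D * u)).
  { apply Rmult_le_compat_l; lra. }
  assert (S3 : (2 - e) * (u + b) * (1 + b) <= (2 - e) * (b*b*b + b) * (1 + b)).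
  { apply Rmult_le_compat_r. lra. apply Rmult_le_compat_l; lra. }
  assert (S4 : 2 * b * (1 - 16 * (b*b*b)) <= 2 * b * (u + 1 - 2 * z)).
  { apply Rmult_le_compat_l; lra. }
  assert (S5 : (2 - e) * (b*b*b + b) * (1 + b) < 2 * b * (1 - 16 * (b*b*b))).
  { unfold b. assert (0 < e*e) by nra. assert (0 < e*e*e) by nra.
    assert (e*e*e <= e*e) by nra. assert (e*e*e*e <= e*e*e) by nra.
    assert (0 < e*e*e*e) by nra. nra. }
  lra.
Qed.

Lemma d_pow_poly (Q : R -> R) p x dQ : 0 < x -> is_derive Q x dQ ->
  is_derive (fun t => Rpower t p + Q t) x (p * Rpower x (p-1) + dQ).
Proof. intros Hx HQ. apply (is_derive_plus (fun t => Rpower t p) Q). apply Rp_deriv; auto. auto. Qed.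

Lemma Bern x p : 0 < x -> p <= 0 -> 1 + p * (x - 1) <= Rpower x p.
Proof. intros Hx Hp. destruct (Rle_dec 1 x).
- assert (H := mono (fun t => Rpower t p + (- p) * t) (fun t => p * Rpower t (p-1) + (- p)) 1 x r).
  cbv beta in H. rewrite Rp_one in H. enough (1 - p <= Rpower x p - p * x) by lra.
  replace (1 - p) with (1 + - p * 1) by ring. replace (Rpower x p - p * x) with (Rpower x p + - p * x) by ring.
  apply H.
  + intros t Ht. apply d_pow_poly. lra. auto_derive; auto; ring.
  + intros t Ht. assert (Rpower t (p-1) <= Rpower 1 (p-1)) by (apply Rp_le_neg; lra).
    rewrite Rp_one in H0. assert (0 < Rpower t (p-1)) by apply Rp_pos. nra.
- assert (H := mono (fun t => - Rpower t p + p * t) (fun t => - (p * Rpower t (p-1)) + p) x 1 ltac:(lra)).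
  cbv beta in H. rewrite Rp_one in H.
  enough (- Rpower x p + p * x <= - 1 + p * 1) by lra.
  apply H.
  + intros t Ht. apply (is_derive_plus (fun t => - Rpower t p) (fun t => p * t)).
    apply (is_derive_opp (fun t => Rpower t p)). apply Rp_deriv; lra. auto_derive; auto; ring.
  + intros t Ht. assert (Rpower 1 (p-1) <= Rpower t (p-1)) by (apply Rp_le_neg; lra).
    rewrite Rp_one in H0. nra.
Qed.

Lemma Rp2_5 : Rpower 2 5 = 32.
Proof. replace 5 with (INR 5) by (simpl; ring). rewrite Rpower_pow by lra. ring. Qed.

Lemma aux32 y q : 1/2 <= y -> -5 <= q <= 0 -> Rpower y q <= 32.
Proof. intros Hy Hq. apply Rle_trans with (Rpower (/2) q). apply Rp_le_neg; lra.
  replace (Rpower (/2) q) with (Rpower 2 (-q)).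
  rewrite <- Rp2_5. apply Rle_Rpower; lra.
  unfold Rpower. rewrite ln_Rinv by lra. f_equal. ring.
Qed.

Lemma aux128 t q : 1/2 <= t <= 1 -> -4 <= q <= 0 -> Rpower t q <= 1 + 128 * (1 - t).
Proof. intros Ht Hq.
  assert (H := mono (fun y => Rpower y q + 128 * y) (fun y => q * Rpower y (q-1) + 128) t 1 ltac:(lra)).
  cbv beta in H. rewrite Rp_one in H. enough (Rpower t q + 128 * t <= 1 + 128 * 1) by lra.
  apply H.
  - intros y Hy. apply d_pow_poly. lra. auto_derive; auto; ring.
  - intros y Hy. assert (Rpower y (q-1) <= 32) by (apply aux32; lra).
    assert (0 < Rpower y (q-1)) by apply Rp_pos. nra.
Qed.

Lemma Up x p : 1/2 <= x <= 1 -> -3 <= p <= 0 -> Rpower x p <= 1 + p * (x - 1) + 192 * ((x-1)*(x-1)).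
Proof. intros Hx Hp.
  assert (H := mono (fun y => Rpower y p + (- p * y - 192 * ((y-1)*(y-1))))
                   (fun y => p * Rpower y (p-1) + (- p - 384 * (y - 1))) x 1 ltac:(lra)).
  cbv beta in H. rewrite Rp_one in H.
  enough (Rpower x p + (- p * x - 192 * ((x-1)*(x-1))) <= 1 + (- p * 1 - 192 * ((1-1)*(1-1)))) by lra.
  apply H.
  - intros y Hy. apply d_pow_poly. lra. auto_derive; auto; ring.
  - intros y Hy. assert (Rpower y (p-1) <= 1 + 128 * (1 - y)) by (apply aux128; lra).
    assert (Rpower 1 (p-1) <= Rpower y (p-1)) by (apply Rp_le_neg; lra). rewrite Rp_one in H1.
    nra.
Qed.

Lemma W_lower k c a b (PL pl PR pr : R -> R) : 0 < a < b ->
  (forall x, a <= x <= (a+b)/2 -> is_derive PL x (pl x)) ->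
  (forall x, (a+b)/2 <= x <= b -> is_derive PR x (pr x)) ->
  (forall x, a <= x <= (a+b)/2 -> pl x <= Rpower x k * (x - c) * (x - a)) ->
  (forall x, (a+b)/2 <= x <= b -> pr x <= Rpower x k * (x - c) * (b - x)) ->
  (PL ((a+b)/2) - PL a) + (PR b - PR ((a+b)/2)) <= W k c a b.
Proof. intros [Ha Hab] HdL HdR HpL HpR.
  set (A := (a+b)/2) in *.
  pose (FL := fun y => 1 * Prim (k+1+1) y + (- 1 * (c+a)) * Prim (k+1) y + (1*c*a) * Prim k y).
  pose (FR := fun y => -1 * Prim (k+1+1) y + (1 * (c+b)) * Prim (k+1) y + (-1*c*b) * Prim k y).
  assert (HL : PL A - PL a <= FL A - FL a).
  { apply (mono_diff FL (fun x => Rpower x k * (1 * x * x + (- 1 * (c+a)) * x + 1*c*a)) PL pl).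
    unfold A; lra.
    intros x Hx; apply d_comb3; unfold A in *; lra.
    auto.
    intros x Hx. specialize (HpL x Hx).
    replace (Rpower x k * (1 * x * x + - 1 * (c + a) * x + 1 * c * a)) with (Rpower x k * (x - c) * (x - a)) by ring. auto. }
  assert (HR : PR b - PR A <= FR b - FR A).
  { apply (mono_diff FR (fun x => Rpower x k * (-1 * x * x + (1 * (c+b)) * x + -1*c*b)) PR pr).
    unfold A; lra.
    intros x Hx; apply d_comb3; unfold A in *; lra.
    auto.
    intros x Hx. specialize (HpR x Hx).
    replace (Rpower x k * (-1 * x * x + (1 * (c+b)) * x + -1*c*b)) with (Rpower x k * (x - c) * (b - x)) by ring. auto. }
  unfold FL, FR in HL, HR. unfold W, Iv. fold A. lra.
Qed.

Lemma W_pos_small r : -1 < r <= -1/2 ->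
  0 < W (r-2) (Gmean (1 - (r+1)/100) (1 + (r+1)/100)) (1 - (r+1)/100) (1 + (r+1)/100).
Proof. intros Hr.
  set (h := (r+1)/100).
  assert (Hh : 0 < h <= 1/200) by (unfold h; lra).
  assert (HG0 := Gpos (1-h) (1+h) ltac:(lra) ltac:(lra)).
  assert (HGG := Gsq (1-h) (1+h) ltac:(lra) ltac:(lra)).
  set (G := Gmean (1-h) (1+h)) in *. clearbody G.
  set (c := 1 - G).
  assert (Hc : h*h/2 <= c).
  { unfold c. destruct (Rle_dec G (1 - h*h/2)). lra. exfalso.
    assert (G*G > (1-h*h/2)*(1-h*h/2)) by (apply Rmult_gt_0_lt_compat; nra).
    nra. }
  set (p := r - 2).
  assert (Hp : p = 100 * h - 3) by (unfold p, h; field).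
  set (C := 192).
  assert (HA : (1 - h + (1 + h)) / 2 = 1) by field.
  assert (Hlow := W_lower (r-2) G (1-h) (1+h)
    (fun x => C * (x-1)^5/5 + (p + C*h) * (x-1)^4/4 + (1 + p*(c+h)) * (x-1)^3/3 + (c+h+p*c*h)*(x-1)^2/2 + c*h*(x-1))
    (fun x => (1 + p*(x-1)) * ((x-1)+c) * ((x-1)+h) + C * (x-1)^3 * ((x-1)+h))
    (fun x => - (p * (x-1)^4/4 + (1 + p*(c-h)) * (x-1)^3/3 + (c-h-p*c*h)*(x-1)^2/2 - c*h*(x-1)))
    (fun x => (1 + p*(x-1)) * ((x-1)+c) * (h-(x-1)))
    ltac:(lra)).
  rewrite HA in Hlow. cbv beta in Hlow.
  enough (0 < c*h*h + p*h^4/6 - C*h^5/20).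
  { eapply Rlt_le_trans; [exact H|]. eapply Rle_trans; [|apply Hlow].
    - right. field.
    - intros x Hx. auto_derive; auto. change RinvImpl.Rinv with Rinv. field.
    - intros x Hx. auto_derive; auto. change RinvImpl.Rinv with Rinv. field.
    - intros x Hx.
      assert (Hb := Bern x p ltac:(lra) ltac:(unfold p; lra)).
      assert (Hu := Up x p ltac:(lra) ltac:(unfold p; lra)).
      fold p. replace (x - (1 - h)) with (x - 1 + h) by ring.
      replace (x - G) with (x - 1 + c) by (unfold c; ring).
      assert (Hc0 : 0 <= c) by (unfold c; nra).
      set (Y := Rpower x p) in *. set (v := x - 1) in *. unfold C.
      assert (Hvh : 0 <= v + h) by (unfold v; lra). assert (Hv : v <= 0) by (unfold v; lra).
      destruct (Rle_dec 0 (v + c)).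
      + assert (E1 : (1 + p*v) * (v + c) <= Y * (v + c)) by (apply Rmult_le_compat_r; lra).
        assert (E2 : (1 + p*v) * (v + c) * (v + h) <= Y * (v + c) * (v + h)) by (apply Rmult_le_compat_r; lra).
        assert (E3 : 192 * v^3 * (v + h) <= 0).
        { assert (0 <= -v) by lra. assert (0 <= 192 * (-v)^3 * (v+h)).
          { apply Rmult_le_pos; [apply Rmult_le_pos; [lra| apply pow_le; lra]|lra]. }
          replace (192 * v^3 * (v+h)) with (- (192 * (-v)^3 * (v+h))) by ring. lra. }
        lra.
      + assert (E1 : (1 + p*v + 192 * (v*v)) * (v + c) <= Y * (v + c)).
        { assert (0 <= (1 + p*v + 192*(v*v) - Y) * (-(v+c))) by (apply Rmult_le_pos; lra).
          match goal with |- ?L <= ?R => assert (R - L = (1 + p*v + 192*(v*v) - Y) * (-(v+c))) by ring end.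
          lra. }
        assert (E2 : 192 * v^3 <= 192 * (v*v) * (v + c)).
        { assert (0 <= 192 * (v*v) * c) by (apply Rmult_le_pos; [apply Rmult_le_pos; [lra|apply Rle_0_sqr]|lra]).
          replace (192 * (v*v) * (v+c)) with (192 * v^3 + 192 * (v*v) * c) by ring. lra. }
        assert (E3 : ((1 + p*v) * (v + c) + 192 * v^3) * (v + h) <= Y * (v + c) * (v + h)).
        { rewrite (Rmult_assoc Y). rewrite <- (Rmult_assoc Y (v + c) (v + h)).
          apply Rmult_le_compat_r; lra. }
        replace ((1 + p * v) * (v + c) * (v + h) + 192 * v ^ 3 * (v + h))
          with (((1 + p*v) * (v + c) + 192 * v^3) * (v + h)) by ring. lra.
    - intros x Hx.
      assert (Hb := Bern x p ltac:(lra) ltac:(unfold p; lra)).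
      fold p. replace (1 + h - x) with (h - (x - 1)) by ring.
      replace (x - G) with (x - 1 + c) by (unfold c; ring).
      assert (Hc0 : 0 <= c) by (unfold c; nra).
      set (Y := Rpower x p) in *. set (v := x - 1) in *.
      assert (0 <= (v + c) * (h - v)) by (apply Rmult_le_pos; unfold v; lra).
      rewrite !Rmult_assoc. apply Rmult_le_compat_r; lra. }
  rewrite Hp. unfold C. assert (0 < h^5) by (apply pow_lt; lra).
  assert (c*h*h >= h^4/2). { replace (h^4/2) with (h*h/2*h*h) by field. nra. }
  replace ((100 * h - 3) * h ^ 4 / 6) with (100 * h^5/6 - h^4/2) by field. lra.
Qed.

Lemma G_counter s : -1 < s -> exists a b, 0 < a /\ 0 < b /\ Gmean a b < lambda s a b.
Proof. intros Hs.
  set (r := Rmin s (-1/2)).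
  assert (Hr : -1 < r <= -1/2) by (unfold r; unfold Rmin; destruct (Rle_dec s (-1/2)); lra).
  assert (Hrs : r <= s) by (unfold r; apply Rmin_l).
  assert (HW := W_pos_small r Hr).
  set (h := (r+1)/100) in *.
  assert (Hh : 0 < h <= 1/200) by (unfold h; lra).
  exists (1-h), (1+h). split. lra. split. lra.
  assert (HG := Gpos (1-h) (1+h) ltac:(lra) ltac:(lra)).
  rewrite lambda_eq by lra.
  assert (HI := Iv_pos (s-2) (1-h) (1+h) ltac:(lra)).
  set (G := Gmean (1-h) (1+h)) in *. clearbody G.
  assert (Hc := W_cmp (s-2) (r-2) G (Rpower G (s-r)) (1-h) (1+h) ltac:(lra)).
  assert (HW2 : 0 < W (s-2) G (1-h) (1+h)).
  { assert (0 < Rpower G (s-r) * W (r-2) G (1-h) (1+h)) by (apply Rmult_lt_0_compat; auto; apply Rp_pos).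
    enough (Rpower G (s-r) * W (r-2) G (1-h) (1+h) <= W (s-2) G (1-h) (1+h)) by lra.
    apply Hc. intros x Hx.
    replace (s-2) with ((r-2) + (s-r)) by ring. rewrite (Rpower_plus (r-2) (s-r) x).
    assert (0 < Rpower x (r-2)) by apply Rp_pos.
    destruct (Rle_dec G x).
    - assert (Rpower G (s-r) <= Rpower x (s-r)) by (apply Rp_le_pos; lra).
      assert (0 <= Rpower x (r-2) * ((Rpower x (s-r) - Rpower G (s-r)) * (x - G))).
      { apply Rmult_le_pos; [lra| apply Rmult_le_pos; lra]. }
      match goal with |- ?L <= ?R => assert (E : R - L = Rpower x (r-2) * ((Rpower x (s-r) - Rpower G (s-r)) * (x - G))) by ring end.
      lra.
    - assert (Rpower x (s-r) <= Rpower G (s-r)) by (apply Rp_le_pos; lra).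
      assert (0 <= Rpower x (r-2) * ((Rpower G (s-r) - Rpower x (s-r)) * (G - x))).
      { apply Rmult_le_pos; [lra| apply Rmult_le_pos; lra]. }
      match goal with |- ?L <= ?R => assert (E : R - L = Rpower x (r-2) * ((Rpower G (s-r) - Rpower x (s-r)) * (G - x))) by ring end.
      lra. }
  unfold W in HW2. replace (s-2+1) with (s-1) in HW2 by ring.
  apply Rmult_lt_reg_r with (Iv (s-2) (1-h) (1+h)); auto. unfold Rdiv. rewrite Rmult_assoc, Rinv_l by lra. lra.
Qed.

Lemma lambda_sym s a b : 0 < a -> 0 < b -> lambda s a b = lambda s b a.
Proof. intros Ha Hb. destruct (Req_dec a b) as [->|n]. reflexivity.
  rewrite !lambda_eq by lra. rewrite (Iv_sym (s-1) a b), (Iv_sym (s-2) a b) by lra. reflexivity. Qed.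

Lemma lambda_diag s a : lambda s a a = a.
Proof. unfold lambda. destruct (Req_EM_T a a); [reflexivity|contradiction]. Qed.

Lemma H_le_all s a b : -3 <= s -> 0 < a -> 0 < b -> Hmean a b <= lambda s a b.
Proof. intros Hs Ha Hb. destruct (Rtotal_order a b) as [Hl|[->|Hl]].
  - apply H_le; lra.
  - rewrite lambda_diag. unfold Hmean. right. field. lra.
  - rewrite lambda_sym by lra. replace (Hmean a b) with (Hmean b a) by (unfold Hmean; f_equal; f_equal; ring).
    apply H_le; lra.
Qed.

Lemma G_le_all s a b : s <= -1 -> 0 < a -> 0 < b -> lambda s a b <= Gmean a b.
Proof. intros Hs Ha Hb. destruct (Rtotal_order a b) as [Hl|[->|Hl]].
  - apply G_le; lra.
  - rewrite lambda_diag. unfold Gmean. rewrite sqrt_square; lra.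
  - rewrite lambda_sym by lra. replace (Gmean a b) with (Gmean b a) by (unfold Gmean; f_equal; ring).
    apply G_le; lra.
Qed.

Theorem theorem3 :
  (forall s : R, -3 <= s <= -1 ->
     forall a b : R, 0 < a -> 0 < b ->
       Hmean a b <= lambda s a b /\ lambda s a b <= Gmean a b) /\
  (forall s : R,
     (forall a b : R, 0 < a -> 0 < b -> Hmean a b <= lambda s a b) <-> -3 <= s) /\
  (forall s : R,
     (forall a b : R, 0 < a -> 0 < b -> lambda s a b <= Gmean a b) <-> s <= -1).
Proof.
  split; [|split].
  - intros s Hs a b Ha Hb. split. apply H_le_all; lra. apply G_le_all; lra.
  - intros s. split.
    + intros Hall. destruct (Rle_dec (-3) s) as [|n]; auto. exfalso.
      destruct (H_counter s ltac:(lra)) as [a [b [Ha [Hb Hl]]]].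
      specialize (Hall a b Ha Hb). lra.
    + intros Hs a b Ha Hb. apply H_le_all; auto.
  - intros s. split.
    + intros Hall. destruct (Rle_dec s (-1)) as [|n]; auto. exfalso.
      destruct (G_counter s ltac:(lra)) as [a [b [Ha [Hb Hl]]]].
      specialize (Hall a b Ha Hb). lra.
    + intros Hs a b Ha Hb. apply G_le_all; auto.
Qed.
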